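(* For every graph $G$, $pw(G) \leq 2\, mw(G)$, where $pw(G)$ is the pathwidth and $mw(G)$ the matching width of $G$.
   Context: For a permutation $SV=(v_1,\dots,v_n)$ of $V(G)$ and $1\le i\le n$, let $V_i=\{v_1,\dots,v_i\}$ and let $G_i$ be the graph on $V(G)$ whose edges are the edges of $G$ with one end in $V_i$ and the other in $V(G)\setminus V_i$. The matching width of $SV$ is $\max_i \nu(G_i)$, where $\nu$ denotes maximum matching size, and the matching width $mw(G)$ is the minimum of this quantity over all permutations $SV$ of $V(G)$. Pathwidth is the standard notion. *)

(* Defs.v *)
From mathcomp Require Import all_boot.
From mathcomp Require Import boolp.

Set Implicit Arguments.
Unset Strict Implicit.
Unset Printing Implicit Defensive.

(* A finite simple graph: vertex set the finType T, adjacency e : rel T,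
   assumed symmetric and irreflexive in the theorem. *)

Definition is_path_decomposition (T : finType) (e : rel T) (bags : seq {set T}) : Prop :=
  [/\ (forall v : T, exists2 B, B \in bags & v \in B),
      (forall x y : T, e x y -> exists2 B, B \in bags & (x \in B) && (y \in B)) &
      (forall (v : T) (i j k : nat), i <= j <= k -> k < size bags ->
         v \in nth set0 bags i -> v \in nth set0 bags k -> v \in nth set0 bags j)].

Definition pd_width (T : finType) (bags : seq {set T}) : nat :=
  (\max_(B <- bags) #|B|).-1.

Definition has_pd_of_width (T : finType) (e : rel T) (k : nat) : bool :=
  `[< exists bags, is_path_decomposition e bags /\ pd_width bags <= k >].

Lemma has_pd_exists (T : finType) (e : rel T) : exists k, has_pd_of_width e k.
Proof.
exists (pd_width [:: [set: T]]); apply/asboolP; exists [:: [set: T]]; split => //.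
split.
- by move=> v; exists [set: T]; rewrite ?inE.
- by move=> x y _; exists [set: T]; rewrite ?inE.
- move=> v [|i] [|j] [|k] //= /andP[Hij Hjk] Hk; by [].
Qed.

Definition pathwidth (T : finType) (e : rel T) : nat := ex_minn (has_pd_exists e).

(* A matching of G_i, where V_i = elements of the prefix S: a set of pairs
   (x, y) with x in S, y not in S, x adjacent to y, such that no two distinct
   pairs share an endpoint. (Each edge of G_i is represented exactly once, oriented
   from V_i to its complement.) *)
Definition cut_matching (T : finType) (e : rel T) (S : seq T) (M : {set T * T}) : bool :=
  [forall p in M, (p.1 \in S) && (p.2 \notin S) && e p.1 p.2] &&
  [forall p in M, forall q in M, (p != q) ==>
     [&& p.1 != q.1, p.1 != q.2, p.2 != q.1 & p.2 != q.2]].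

Definition cut_nu (T : finType) (e : rel T) (S : seq T) : nat :=
  \max_(M : {set T * T} | cut_matching e S M) #|M|.

Definition order_mw (T : finType) (e : rel T) (s : seq T) : nat :=
  \max_(i < #|T|.+1) cut_nu e (take i s).

(* mw(G): minimum over all orderings (duplicate-free #|T|-tuples, i.e.
   permutations of V(G)).  The neutral element #|T| is an upper bound for every
   order_mw, and the index set is never empty. *)
Definition matching_width (T : finType) (e : rel T) : nat :=
  \big[minn/#|T|]_(s : #|T|.-tuple T | uniq s) order_mw e s.

(* Main.v *)
Require Import Defs.
From mathcomp Require Import all_boot zify.
From mathcomp Require Import boolp.

Set Implicit Arguments.
Unset Strict Implicit.
Unset Printing Implicit Defensive.


Section CM.
Variables (T : finType) (e : rel T).

Definition VM (M : {set T * T}) : {set T} :=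
  [set p.1 | p in M] :|: [set p.2 | p in M].

Lemma inVM (x : T) (M : {set T * T}) : reflect (exists2 p, p \in M & (x = p.1) \/ (x = p.2)) (x \in VM M).
Proof.
apply: (iffP setUP).
- by case=> /imsetP[p Hp ->]; exists p => //; [left|right].
- by case=> p Hp [->|->]; [left|right]; apply: imset_f.
Qed.

Lemma VM1 (p : T * T) (M : {set T * T}) : p \in M -> p.1 \in VM M.
Proof. by move=> Hp; apply/inVM; exists p => //; left. Qed.
Lemma VM2 (p : T * T) (M : {set T * T}) : p \in M -> p.2 \in VM M.
Proof. by move=> Hp; apply/inVM; exists p => //; right. Qed.

Lemma VM_sub (M N : {set T * T}) : M \subset N -> {subset VM M <= VM N}.
Proof.
move=> /subsetP H x /inVM [p Hp Hx]; apply/inVM; exists p => //; exact: H.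
Qed.

Lemma card_VM (M : {set T * T}) : #|VM M| <= 2 * #|M|.
Proof.
rewrite /VM; apply: leq_trans (leq_card_setU _ _) _.
by rewrite mul2n -addnn; apply: leq_add; apply: leq_imset_card.
Qed.

Lemma cmP (S : seq T) (M : {set T * T}) : cut_matching e S M ->
  (forall p, p \in M -> [/\ p.1 \in S, p.2 \notin S & e p.1 p.2]) /\
  (forall p q, p \in M -> q \in M -> p != q ->
     [/\ p.1 != q.1, p.1 != q.2, p.2 != q.1 & p.2 != q.2]).
Proof.
case/andP=> /forall_inP H1 /forall_inP H2; split.
- by move=> p /H1 /andP[/andP[-> ->] ->].
- move=> p q Hp Hq Hpq; move: (H2 p Hp) => /forall_inP /(_ q Hq).
  by rewrite Hpq => /and4P.
Qed.

Lemma cmI (S : seq T) (M : {set T * T}) :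
  (forall p, p \in M -> [/\ p.1 \in S, p.2 \notin S & e p.1 p.2]) ->
  (forall p q, p \in M -> q \in M -> p != q ->
     [/\ p.1 != q.1, p.1 != q.2, p.2 != q.1 & p.2 != q.2]) ->
  cut_matching e S M.
Proof.
move=> H1 H2; apply/andP; split.
- by apply/forall_inP => p /H1 [-> -> ->].
- apply/forall_inP => p Hp; apply/forall_inP => q Hq; apply/implyP => Hpq.
  by case: (H2 p q Hp Hq Hpq) => -> -> -> ->.
Qed.

Lemma cm_sub (S : seq T) (M N : {set T * T}) : M \subset N -> cut_matching e S N -> cut_matching e S M.
Proof.
move=> /subsetP Hs /cmP [H1 H2]; apply: cmI.
- by move=> p /Hs /H1.
- by move=> p q /Hs Hp /Hs Hq; apply: H2.
Qed.

Lemma cm_add (S : seq T) (M : {set T * T}) (a b : T) : cut_matching e S M -> a \in S -> b \notin S -> e a b ->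
  a \notin VM M -> b \notin VM M -> cut_matching e S ((a, b) |: M).
Proof.
move=> /cmP [H1 H2] Ha Hb Hab HaM HbM; apply: cmI.
- by move=> p /setU1P [->|/H1].
- have Hne : forall q, q \in M -> [/\ a != q.1, a != q.2, b != q.1 & b != q.2].
    move=> q Hq; split; apply/eqP => E.
    + by move: HaM; rewrite E (VM1 Hq).
    + by move: HaM; rewrite E (VM2 Hq).
    + by move: HbM; rewrite E (VM1 Hq).
    + by move: HbM; rewrite E (VM2 Hq).
  move=> p q /setU1P [->|Hp] /setU1P [->|Hq]; rewrite ?eqxx //.
  + by move=> _; apply: Hne.
  + by move=> _; case: (Hne p Hp) => ????; split; rewrite eq_sym.
  + exact: H2.
Qed.

Lemma cm_new (S : seq T) (M N : {set T * T}) (p : T * T) : cut_matching e S N -> M \subset N -> p \in N -> p \notin M ->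
  p.1 \notin VM M /\ p.2 \notin VM M.
Proof.
move=> /cmP [_ H2] /subsetP Hs Hp HpM; split; apply/negP => /inVM [q Hq Hx];
have Hpq : p != q by apply: contraNneq HpM => ->.
all: case: (H2 p q Hp (Hs q Hq) Hpq) => h1 h2 h3 h4.
- by case: Hx => E; [move: h1|move: h2]; rewrite E eqxx.
- by case: Hx => E; [move: h3|move: h4]; rewrite E eqxx.
Qed.

Definition maxl (S : seq T) (M : {set T * T}) := forall a b, a \in S -> b \notin S -> e a b ->
  (a \in VM M) || (b \in VM M).

Lemma extend (S : seq T) (M0 : {set T * T}) : cut_matching e S M0 ->
  exists N, [/\ cut_matching e S N, M0 \subset N & maxl S N].
Proof.
move=> H0.
pose P := fun N => cut_matching e S N && (M0 \subset N).
have P0 : P M0 by rewrite /P H0 subxx.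
case: (@arg_maxnP _ M0 P (fun N : {set T * T} => #|N|) P0) => N /andP [HN Hsub] Hmax.
exists N; split => // a b Ha Hb Hab; apply/negPn/negP; rewrite negb_or => /andP [Ha' Hb'].
have Hnew : (a, b) \notin N by apply: contra Ha' => /VM1.
have : P ((a, b) |: N).
  by rewrite /P (cm_add HN) //; apply: subset_trans Hsub (subsetUr _ _).
move/Hmax; rewrite cardsU1 Hnew; lia.
Qed.

End CM.



Section Seq.
Variables (T : finType) (e : rel T) (s : seq T).
Hypotheses (suniq : uniq s) (sall : forall x : T, x \in s).

Lemma inT x c : (x \in take c s) = (index x s < c).
Proof. exact: in_take. Qed.

Lemma idx_inj x y : index x s = index y s -> x = y.
Proof.
move=> E; rewrite -(nth_index x (sall x)) E; exact: nth_index.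
Qed.

Lemma new_uniq x y j : x \notin take j s -> x \in take j.+1 s ->
  y \notin take j s -> y \in take j.+1 s -> x = y.
Proof.
rewrite !inT => h1 h2 h3 h4; apply: idx_inj; lia.
Qed.

Lemma take_mono x i j : i <= j -> x \in take i s -> x \in take j s.
Proof. rewrite !inT; lia. Qed.

Definition valid j (M : {set T * T}) :=
  cut_matching e (take j s) M /\ maxl e (take j s) M.

Definition good j (M N : {set T * T}) : Prop :=
  [/\ valid j.+1 N,
      (forall p, p \in M -> p.2 \notin take j.+1 s -> p \in N),
      (forall x, x \in take j s -> x \in VM N -> x \in VM M) &
      (forall p, p \in M -> p.2 \in take j.+1 s -> p.1 \notin VM N ->
         forall y, y \notin take j.+1 s -> e p.1 y -> y \in VM M)].

Lemma good_exists j M : valid j M -> exists N, good j M N.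
Proof.
case=> HM Hmax; have [H1 H2] := cmP HM.
pose M' := [set p in M | p.2 \notin take j.+1 s].
have M'M : M' \subset M by apply/subsetP => p; rewrite inE => /andP[].
have HM' : cut_matching e (take j.+1 s) M'.
  apply: cmI.
  - move=> p; rewrite inE => /andP [/H1 [Ha _ Hab] Hb]; split => //.
    exact: (take_mono (leqnSn j) Ha).
  - by move=> p q; rewrite !inE => /andP [Hp _] /andP [Hq _]; apply: H2.
pose ex := [exists p, exists y, [&& p \in M, p.2 \in take j.+1 s, y \notin take j.+1 s,
              e p.1 y & y \notin VM M']].
have [M'' [HM'' M'M'' M''M Hex]] : exists M'', [/\ cut_matching e (take j.+1 s) M'',
    M' \subset M'', (forall x, x \in take j s -> x \in VM M'' -> x \in VM M) &
    (forall p, p \in M -> p.2 \in take j.+1 s -> p.1 \notin VM M'' ->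
         forall y, y \notin take j.+1 s -> e p.1 y -> y \in VM M')].
  case: (boolP ex) => [/existsP [p /existsP [y /and5P [Hp Hp2 Hy Hpy HyM']]]|Hnex].
  - exists ((p.1, y) |: M'); split.
    + apply: cm_add => //.
      * by case: (H1 p Hp) => Ha _ _; exact: (take_mono (leqnSn j) Ha).
      * apply/negP => /inVM [q]; rewrite inE => /andP [Hq Hq2] Hx.
        have Hpq : p != q by apply: contraNneq Hq2 => <-.
        case: (H2 p q Hp Hq Hpq) => h1 h2 _ _.
        by case: Hx => E; [move: h1|move: h2]; rewrite -E eqxx.
    + exact: subsetUr.
    + move=> x Hx /inVM [q /setU1P [-> [] /= E|Hq Hx']].
      * by rewrite E; exact: VM1.
      * by move: Hy; rewrite -E (take_mono (leqnSn j) Hx).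
      * by apply: VM_sub M'M _ _; apply/inVM; exists q.
    + move=> p' Hp' Hp'2 Hp1.
      have E : p' = p.
        apply/eqP; apply/negPn/negP => Hne.
        case: (H2 p' p Hp' Hp Hne) => _ _ _ /negP; apply.
        case: (H1 p' Hp') => _ Hn1 _; case: (H1 p Hp) => _ Hn2 _.
        by apply/eqP; apply: (new_uniq Hn1 Hp'2 Hn2 Hp2).
      by move: Hp1; rewrite E; move/negP; case; apply: (VM1 (setU11 _ _)).
  - exists M'; split => //.
    + by move=> x _; apply: VM_sub.
    + move=> p Hp Hp2 _ y Hy Hpy; apply/negPn/negP => HyM'.
      move/existsP: Hnex; apply; exists p; apply/existsP; exists y.
      by rewrite Hp Hp2 Hy Hpy HyM'.
have [N [HN M''N HmaxN]] := extend HM''.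
exists N; split.
- by [].
- move=> p Hp Hp2; apply: (subsetP M''N); apply: (subsetP M'M'').
  by rewrite inE Hp Hp2.
- move=> x Hx /inVM [q Hq Hxq].
  have [HN1 _] := cmP HN; case: (HN1 q Hq) => Hq1 Hq2 Hqe.
  have Ex : x = q.1.
    case: Hxq => // E; by move: Hq2; rewrite -E (take_mono (leqnSn j) Hx).
  case: (boolP (q \in M'')) => HqM''.
  + by apply: M''M => //; rewrite Ex; apply: VM1.
  + apply/negPn/negP => HxM.
    have [_ Hq2'] := cm_new HN M''N Hq HqM''.
    have : (x \in VM M) || (q.2 \in VM M).
      by apply: Hmax => //; [apply: contra Hq2; exact: take_mono (leqnSn j) | rewrite Ex].
    rewrite (negbTE HxM) /= => /inVM [r Hr [E|E]].
    * by case: (H1 r Hr) => Hr1 _ _; move: Hq2; rewrite E (take_mono (leqnSn j) Hr1).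
    * move: Hq2'; rewrite E; case/negP; apply: VM_sub M'M'' _ _.
      apply: VM2; rewrite inE Hr -E; exact: Hq2.
- move=> p Hp Hp2 Hp1 y Hy Hpy; apply: (VM_sub M'M); apply: (Hex p) => //.
  apply/negP => H; case/negP: Hp1; exact: (VM_sub M''N H).
Qed.

End Seq.



Section Seq3.
Variables (T : finType) (e : rel T) (s : seq T).
Hypotheses (suniq : uniq s) (sall : forall x : T, x \in s) (ssize : size s = #|T|).

Definition step j (M : {set T * T}) : {set T * T} :=
  if [pick N | `[< good e s j M N >] ] is Some N then N else set0.

Fixpoint Ms j := if j is j'.+1 then step j' (Ms j') else set0.

Lemma Ms_valid j : valid e s j (Ms j).
Proof.
elim: j => [|j IH] /=.
- split.
  + by apply: cmI => [p|p q]; rewrite inE.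
  + by move=> a b; rewrite take0 in_nil.
- rewrite /step; case: pickP => [N /asboolP [] //|H].
  have [N HN] := good_exists suniq sall IH.
  by move: (H N); rewrite (asboolT HN).
Qed.

Lemma Ms_good j : good e s j (Ms j) (Ms j.+1).
Proof.
rewrite /= /step; case: pickP => [N /asboolP //|H].
have [N HN] := good_exists suniq sall (Ms_valid j).
by move: (H N); rewrite (asboolT HN).
Qed.

Lemma partner x c : x \in take c s -> x \in VM (Ms c) ->
  exists2 r, r \in Ms c & r.1 = x /\ r.2 \notin take c s.
Proof.
move=> Hx /inVM [r Hr Hxr]; have [H1 _] := Ms_valid c.
have [Hc _] := cmP H1; have [Hr1 Hr2 _] := Hc r Hr.
exists r => //; split => //; case: Hxr => // E.
by move: Hr2; rewrite -E Hx.
Qed.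

Lemma right1 y c : y \notin take c.+1 s -> y \in VM (Ms c) -> y \in VM (Ms c.+1).
Proof.
move=> Hy /inVM [r Hr Hxr]; have [H1 _] := Ms_valid c.
have [Hc _] := cmP H1; have [Hr1 Hr2 _] := Hc r Hr.
have [_ Hpers _ _] := Ms_good c.
case: Hxr => E.
- by move: Hy; rewrite E (take_mono suniq sall (leqnSn c) Hr1).
- by rewrite E; apply: VM2; apply: Hpers => //; rewrite -E.
Qed.

Lemma rightN y c d : c <= d -> y \notin take d s -> y \in VM (Ms c) -> y \in VM (Ms d).
Proof.
elim: d => [|d IH]; first by rewrite leqn0 => /eqP ->.
rewrite leq_eqVlt => /orP [/eqP -> //|Hcd] Hy Hc.
apply: right1 => //; apply: IH => //.
by apply: contra Hy; apply: (take_mono suniq sall); lia.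
Qed.

Lemma left1 x c : x \in take c s -> x \in VM (Ms c.+1) -> x \in VM (Ms c).
Proof. by have [_ _ H _] := Ms_good c; apply: H. Qed.

Lemma leftN x c d : c <= d -> x \in take c s -> x \in VM (Ms d) -> x \in VM (Ms c).
Proof.
elim: d => [|d IH]; first by rewrite leqn0 => /eqP ->.
rewrite leq_eqVlt => /orP [/eqP -> //|Hcd] Hx Hd.
apply: IH => //; apply: left1 => //.
move: Hx; rewrite !(inT sall); lia.
Qed.

Lemma disc (P : nat -> bool) a b : a <= b -> P a -> ~~ P b ->
  exists c, [/\ a <= c, c < b, P c & ~~ P c.+1].
Proof.
elim: b => [|b IH]; first by rewrite leqn0 => /eqP -> ->.
rewrite leq_eqVlt => /orP [/eqP -> -> //|Hab] Ha Hb.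
case: (boolP (P b)) => Hb'.
- by exists b; split => //; lia.
- have [c [h1 h2 h3 h4]] := IH Hab Ha Hb'.
  by exists c; split => //; lia.
Qed.

Definition bag (v : T) := [set v] :|: VM (Ms (index v s).+1).
Definition bags := map bag s.

Lemma nth_bags (x0 : T) i : i < size s ->
  nth set0 bags i = [set nth x0 s i] :|: VM (Ms i.+1).
Proof.
move=> Hi; rewrite /bags (nth_map x0) // /bag index_uniq //.
Qed.

Lemma in_bag (x0 v : T) i : i < size s ->
  (v \in nth set0 bags i) = (index v s == i) || (v \in VM (Ms i.+1)).
Proof.
move=> Hi; rewrite (nth_bags x0 Hi) !inE; congr (_ || _).
apply/eqP/eqP => [->|<-]; first by rewrite index_uniq.
by rewrite nth_index.
Qed.

Lemma card_bag (v : T) : v \in s -> #|bag v| <= (2 * order_mw e s).+1.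
Proof.
move=> Hv; rewrite /bag cardsU1 -add1n; apply: leq_add (leq_b1 _) _.
apply: leq_trans (card_VM _) _.
rewrite leq_mul2l; apply/orP; right.
have [H1 _] := Ms_valid (index v s).+1.
apply: leq_trans (@leq_bigmax_cond _ (fun M => cut_matching e (take (index v s).+1 s) M) (fun M => #|M|) _ H1) _.
have Hlt : (index v s).+1 < #|T|.+1 by rewrite ltnS -ssize index_mem.
rewrite /order_mw -/(cut_nu e (take (index v s).+1 s)).
exact: (@leq_bigmax _ (fun i : 'I_#|T|.+1 => cut_nu e (take i s)) (Ordinal Hlt)).
Qed.

Lemma mk_bag x y i : i < size s -> x \in nth set0 bags i -> y \in nth set0 bags i ->
  exists2 B, B \in bags & (x \in B) && (y \in B).
Proof.
move=> Hi h1 h2; exists (nth set0 bags i); last by rewrite h1 h2.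
by apply: mem_nth; rewrite size_map.
Qed.

Lemma edge_cov x y : e x y -> index x s < index y s ->
  exists2 B, B \in bags & (x \in B) && (y \in B).
Proof.
move=> Hxy Hpq.
have Hq : index y s < size s by rewrite index_mem.
have Hp : index x s < size s by rewrite index_mem.
case: (boolP (y \in VM (Ms (index x s).+1))) => HyA.
  by apply: (mk_bag Hp); rewrite (in_bag x) // ?eqxx // HyA orbT.
have HxB : x \in VM (Ms (index x s).+1).
  have [_ Hmax] := Ms_valid (index x s).+1.
  have := Hmax x y _ _ Hxy; rewrite (negbTE HyA) orbF; apply.
  - by rewrite (inT sall).
  - by rewrite (inT sall) -leqNgt.
case: (boolP (x \in VM (Ms (index y s)))) => Hxq.
- have [r Hr [Hr1 Hr2]] := partner (x:=x) (c:=index y s) (ltac:(by rewrite (inT sall))) Hxq.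
  case: (eqVneq r.2 y) => Hry.
  + have Hq1 : (index y s).-1 < size s by lia.
    have Hq0 : 0 < index y s by lia.
    apply: (mk_bag Hq1); rewrite !(in_bag x _ Hq1) (prednK Hq0).
    * by rewrite -Hr1 (VM1 Hr) orbT.
    * by apply/orP; right; have := VM2 Hr; rewrite Hry.
  + have H' : r.2 \notin take (index y s).+1 s.
      apply/negP => H; move/eqP: Hry; apply.
      apply: (new_uniq suniq sall Hr2 H); rewrite (inT sall) //; lia.
    have [_ Hpers _ _] := Ms_good (index y s).
    have Hr' := Hpers r Hr H'.
    apply: (mk_bag Hq); rewrite !(in_bag x _ Hq) ?eqxx ?orTb //.
    by rewrite -Hr1 (VM1 Hr') orbT.
- have [c [h1 h2 h3 h4]] := disc (P := fun c => x \in VM (Ms c)) Hpq HxB Hxq.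
  have [r Hr [Hr1 Hr2]] := partner (c:=c) (x:=x) (ltac:(by rewrite (inT sall))) h3.
  have [_ Hpers _ H4] := Ms_good c.
  have Hr2' : r.2 \in take c.+1 s.
    apply/negPn/negP => H; move/negP: h4; apply; rewrite -Hr1; exact: VM1 (Hpers r Hr H).
  have Hy := H4 r Hr Hr2' (ltac:(by rewrite Hr1)) y (ltac:(by rewrite (inT sall) -leqNgt)) (ltac:(by rewrite Hr1)).
  have Hc1 : c.-1 < size s by lia.
  have Hc0 : 0 < c by lia.
  apply: (mk_bag Hc1); rewrite !(in_bag x _ Hc1) (prednK Hc0).
  + by rewrite h3 orbT.
  + by rewrite Hy orbT.
Qed.

Lemma interval v i j k : i <= j <= k -> k < size bags ->
  v \in nth set0 bags i -> v \in nth set0 bags k -> v \in nth set0 bags j.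
Proof.
rewrite size_map => /andP [Hij Hjk] Hk.
have Hj : j < size s by lia.
have Hi : i < size s by lia.
rewrite !(in_bag v) //.
case: (ltngtP j (index v s)) => Hjp; last by [].
all: rewrite orFb.
- move=> /orP [/eqP E|Hi'] _; first by lia.
  apply: (rightN (c:=i.+1)) => //; rewrite ?(inT sall); lia.
- move=> _ /orP [/eqP E|Hk']; first by lia.
  apply: (leftN (d:=k.+1)) => //; rewrite ?(inT sall); lia.
Qed.

Lemma decomp : symmetric e ->
  is_path_decomposition e bags /\ pd_width bags <= 2 * order_mw e s.
Proof.
move=> esym; split; first split.
- move=> v; exists (bag v); first exact: map_f.
  by rewrite /bag setU11.
- move=> x y Hxy.
  case: (ltngtP (index x s) (index y s)) => H.
  + exact: edge_cov.
  + have [B HB HB'] := edge_cov (x:=y) (y:=x) (ltac:(by rewrite esym)) H.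
    by exists B => //; rewrite andbC.
  + have E : x = y by apply: (idx_inj sall).
    by exists (bag x); [exact: map_f | rewrite -E /bag setU11].
- move=> v i j k; exact: interval.
- rewrite /pd_width.
  have : \max_(B <- bags) #|B| <= (2 * order_mw e s).+1.
    apply/bigmax_leqP_seq => B /mapP [v Hv ->] _; exact: card_bag.
  lia.
Qed.

End Seq3.

Theorem theorem7' (T : finType) (e : rel T) :
  symmetric e -> irreflexive e ->
  pathwidth e <= 2 * matching_width e.
Proof.
move=> esym _.
have Hpw : forall k, has_pd_of_width e k -> pathwidth e <= k.
  by move=> k Hk; rewrite /pathwidth; case: ex_minnP => m _ Hmin; apply: Hmin.
have : matching_width e = #|T| \/
       exists s : #|T|.-tuple T, uniq s /\ matching_width e = order_mw e s.
  rewrite /matching_width.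
  apply: (big_ind (fun x => x = #|T| \/ exists s : #|T|.-tuple T, uniq s /\ x = order_mw e s)).
  - by left.
  - move=> a b Ha Hb; case: (leqP a b) => h //.
  - by move=> t Ht; right; exists t.
case=> [->|[s [Hs ->]]].
- apply: leq_trans (Hpw (pd_width [:: [set: T]]) _) _.
  + apply/asboolP; exists [:: [set: T]]; split => //.
    split.
    * by move=> v; exists [set: T]; rewrite ?inE.
    * by move=> x y _; exists [set: T]; rewrite ?inE.
    * move=> v [|i] [|j] [|k] //= /andP[Hij Hjk] Hk; by [].
  + rewrite /pd_width big_cons big_nil cardsT; lia.
- have ssize : size s = #|T| by rewrite size_tuple.
  have sall : forall x : T, x \in s.
    move=> x; apply/negPn/negP => Hx.
    have Hu : uniq (x :: s) by rewrite /= Hx Hs.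
    have := max_card (mem (x :: s)); by rewrite (card_uniqP Hu) /= ssize ltnn.
  have [Hd Hw] := decomp Hs sall ssize esym.
  apply: leq_trans (Hpw _ _) Hw.
  by apply/asboolP; exists (bags e s).
Qed.



Theorem theorem7 (T : finType) (e : rel T) :
  symmetric e -> irreflexive e ->
  pathwidth e <= 2 * matching_width e.
Proof. exact: theorem7'. Qed.
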